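(* Under assumption (A), for every $\tau>0$, with probability at least $$1-\sigma\exp\Big(-\min_{g\in\{0,\dots,G\}}\Big[\nu_g n_g-\log(G+1),\ \frac{\tau^2}{\eta_g^2k^2}\Big]\Big)$$ we have, simultaneously for all $\boldsymbol{\delta}\in\bar{\mathcal{H}}$, $$\frac{2}{n}\boldsymbol{\omega}^T\mathbf{X}\boldsymbol{\delta}\le\sqrt{\frac{8K^2+4}{n}}\ \max_{g\in\{0,\dots,G\}}\Big(\zeta_g k\,\omega(\mathcal{A}_g)+\epsilon_g\sqrt{\log(G+1)}+\tau\Big),$$ where $\sigma_g,\nu_g,\eta_g,\zeta_g,\epsilon_g>0$ are group-dependent constants (those for which, for each $g$ and each $\tau>0$, with probability at least $1-\frac{\sigma_g}{G+1}\exp(-\min[\nu_gn_g-\log(G+1),\tau^2/(\eta_g^2k^2)])$ one has $\sqrt{n/n_g}\,\|\boldsymbol{\omega}_g\|_2\sup_{\mathbf{u}\in\mathcal{A}_g}\langle\mathbf{X}_g^T\boldsymbol{\omega}_g/\|\boldsymbol{\omega}_g\|_2,\mathbf{u}\rangle\le\sqrt{(2K^2+1)n}(\zeta_gk\omega(\mathcal{A}_g)+\epsilon_g\sqrt{\log(G+1)}+\tau)$), and $\sigma=\max_g\sigma_g$.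
   Context: Data enriched linear model: $G\ge1$, $p\ge1$. For $g\in\{1,\dots,G\}$, $\mathbf{X}_g\in\mathbb{R}^{n_g\times p}$ has rows $\mathbf{x}_{gi}^T$ and $\boldsymbol{\omega}_g\in\mathbb{R}^{n_g}$ has entries $\omega_{gi}$; $n=\sum_{g=1}^Gn_g$, $n_0:=n$, $\mathbf{X}_0$ and $\boldsymbol{\omega}_0=\boldsymbol{\omega}\in\mathbb{R}^n$ are the vertical stackings of the $\mathbf{X}_g$ and of the $\boldsymbol{\omega}_g$. $\mathbf{X}\in\mathbb{R}^{n\times(G+1)p}$ is the block matrix whose $g$-th block row ($g=1,\dots,G$) has $\mathbf{X}_g$ in block column $0$, $\mathbf{X}_g$ in block column $g$ and zeros elsewhere, so that $\boldsymbol{\omega}^T\mathbf{X}\boldsymbol{\delta}=\sum_{g=1}^G\boldsymbol{\omega}_g^T\mathbf{X}_g(\boldsymbol{\delta}_0+\boldsymbol{\delta}_g)$. For $g\in\{0,\dots,G\}$, $f_g$ is convex, $\boldsymbol{\beta}_g^*\in\mathbb{R}^p$, $\mathcal{C}_g$ is the cone generated by $\{\boldsymbol{\delta}:f_g(\boldsymbol{\beta}_g^*+\boldsymbol{\delta})\le f_g(\boldsymbol{\beta}_g^* )\}$, $\mathcal{A}_g=\mathcal{C}_g\cap\mathbb{S}^{p-1}$, and $\bar{\mathcal{H}}=\{\boldsymbol{\delta}=(\boldsymbol{\delta}_0^T,\dots,\boldsymbol{\delta}_G^T)^T:\boldsymbol{\delta}_g\in\mathcal{C}_g,\ \sum_{g=0}^G\sqrt{n_g/n}\|\boldsymbol{\delta}_g\|_2=1\}$.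 Gaussian width $\omega(\mathcal{V})=\mathbb{E}\sup_{\mathbf{u}\in\mathcal{V}}\langle\mathbf{h},\mathbf{u}\rangle$, $\mathbf{h}\sim N(0,I_p)$. Assumption (A): rows $\mathbf{x}_{gi}$ i.i.d. zero-mean isotropic sub-Gaussian with $\|\mathbf{x}\|_{\psi_2}\le k$; noise entries $\omega_{gi}$ i.i.d. zero-mean unit-variance sub-Gaussian with $\|\omega_{gi}\|_{\psi_2}\le K$ ($\|\cdot\|_{\psi_2}$ the sub-Gaussian norm). *)

(* Defs.v *)
From HB Require Import structures.
From mathcomp Require Import all_boot all_order all_algebra.
From mathcomp Require Import all_classical all_reals all_analysis.
Set Implicit Arguments. Unset Strict Implicit. Unset Printing Implicit Defensive.
Import Order.TTheory GRing.Theory Num.Theory.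
Local Open Scope classical_set_scope.
Local Open Scope ring_scope.

Section defs.
Context {R : realType} {p : nat}.

Definition dotp (u v : 'rV[R]_p) : R := \sum_(j < p) u 0 j * v 0 j.
Definition norm2 (v : 'rV[R]_p) : R := Num.sqrt (\sum_(j < p) v 0 j ^+ 2).

Definition convex_fn (f : 'rV[R]_p -> R) : Prop :=
  forall (x y : 'rV[R]_p) (t : R), 0 <= t <= 1 ->
    f (t *: x + (1 - t) *: y) <= t * f x + (1 - t) * f y.

Definition cone_gen (f : 'rV[R]_p -> R) (b : 'rV[R]_p) : set 'rV[R]_p :=
  [set v | exists t : R, exists d : 'rV[R]_p, 0 <= t /\ f (b + d) <= f b /\ v = t *: d].

Definition sphere_part (C : set 'rV[R]_p) : set 'rV[R]_p := [set u | C u /\ norm2 u = 1].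
End defs.

Local Open Scope ereal_scope.
Section prob.
Context {R : realType} {p : nat} {d : measure_display} {T : measurableType d}.
Variable P : probability T R.

Definition psi2_norm (Y : T -> R) : \bar R :=
  ereal_inf [set t%:E | t in [set t : R | (0 < t)%R /\
     \int[P]_w (expR (Y w ^+ 2 / t ^+ 2))%:E <= 2%:E]].

Definition subg_vec_le (x : T -> 'rV[R]_p) (k : R) : Prop :=
  forall u : 'rV[R]_p, norm2 u = 1%R -> psi2_norm (fun w => dotp (x w) u) <= k%:E.

Definition rect (A : 'I_p -> set R) : set 'rV[R]_p := [set v | forall j, A j (v 0%R j)].

Definition meas_vec (x : T -> 'rV[R]_p) : Prop :=
  forall j, measurable_fun setT (fun w => x w 0%R j).

Definition indep_vecs (I : finType) (X : I -> T -> 'rV[R]_p) : Prop :=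
  forall A : I -> 'I_p -> set R, (forall i j, measurable (A i j)) ->
    P (\bigcap_(i in [set: I]) (X i @^-1` rect (A i))) =
    \prod_(i : I) P (X i @^-1` rect (A i)).

Definition ident_vecs (I : finType) (X : I -> T -> 'rV[R]_p) : Prop :=
  forall (i i' : I) (A : 'I_p -> set R), (forall j, measurable (A j)) ->
    P (X i @^-1` rect A) = P (X i' @^-1` rect A).

Definition indep_rvs (I : finType) (X : I -> T -> R) : Prop :=
  forall A : I -> set R, (forall i, measurable (A i)) ->
    P (\bigcap_(i in [set: I]) (X i @^-1` A i)) = \prod_(i : I) P (X i @^-1` A i).

Definition ident_rvs (I : finType) (X : I -> T -> R) : Prop :=
  forall (i i' : I) (A : set R), measurable A -> P (X i @^-1` A) = P (X i' @^-1` A).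

Definition std_gaussian_vec (h : 'I_p -> T -> R) : Prop :=
  (forall j, measurable_fun setT (h j)) /\ indep_rvs h /\
  forall j (B : set R), measurable B -> P (h j @^-1` B) = normal_prob 0%R 1%R B.

Definition gauss_width (h : 'I_p -> T -> R) (V : set 'rV[R]_p) : \bar R :=
  \int[P]_w ereal_sup [set (dotp (\row_j h j w) u)%:E | u in V].
End prob.

Section model.
Context {R : realType} {p : nat} {T : Type} {G : nat} (n : 'I_G -> nat).
Local Open Scope ring_scope.
(* group index j : 'I_G.+1 ; j = 0 is the shared (stacked) group, lift ord0 g is group g+1 *)
Definition nsz (j : 'I_G.+1) : nat :=
  match unlift ord0 j with Some g => n g | None => (\sum_(g < G) n g)%N end.

Variables (x : forall g : 'I_G, 'I_(n g) -> T -> 'rV[R]_p)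
          (w : forall g : 'I_G, 'I_(n g) -> T -> R).

Definition XTw (j : 'I_G.+1) (t : T) : 'rV[R]_p :=
  match unlift ord0 j with
  | Some g => \sum_(i < n g) w i t *: x i t
  | None => \sum_(g < G) \sum_(i < n g) w i t *: x i t end.

Definition normw (j : 'I_G.+1) (t : T) : R :=
  match unlift ord0 j with
  | Some g => Num.sqrt (\sum_(i < n g) w i t ^+ 2)
  | None => Num.sqrt (\sum_(g < G) \sum_(i < n g) w i t ^+ 2) end.

Definition wXd (delta : 'I_G.+1 -> 'rV[R]_p) (t : T) : R :=
  \sum_(g < G) \sum_(i < n g) w i t * dotp (x i t) (delta ord0 + delta (lift ord0 g)).
End model.

Definition Hbar {R : realType} {p G : nat} (n : 'I_G -> nat)
  (f : 'I_G.+1 -> 'rV[R]_p -> R) (b : 'I_G.+1 -> 'rV[R]_p)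
  (delta : 'I_G.+1 -> 'rV[R]_p) : Prop :=
  (forall j, cone_gen (f j) (b j) (delta j)) /\
  (\sum_(j < G.+1) Num.sqrt ((nsz n j)%:R / (nsz n ord0)%:R) * norm2 (delta j) = 1)%R.

(* Main.v *)
Require Import Defs.
From HB Require Import structures.
From mathcomp Require Import all_boot all_order all_algebra.
From mathcomp Require Import all_classical all_reals all_analysis.
From mathcomp Require Import ring lra.
Import Order.TTheory GRing.Theory Num.Theory.
Local Open Scope classical_set_scope.
Local Open Scope ring_scope.

Section helpers.
Context {R : realType} {p : nat}.
Implicit Types u v : 'rV[R]_p.

Lemma dotpDr u v1 v2 : dotp u (v1 + v2) = dotp u v1 + dotp u v2.
Proof. by rewrite /dotp -big_split; apply: eq_bigr => j _; rewrite mxE mulrDr. Qed.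

Lemma dotpZr u c v : dotp u (c *: v) = c * dotp u v.
Proof. by rewrite /dotp mulr_sumr; apply: eq_bigr => j _; rewrite mxE mulrCA. Qed.

Lemma dotpZl u c v : dotp (c *: u) v = c * dotp u v.
Proof. by rewrite /dotp mulr_sumr; apply: eq_bigr => j _; rewrite mxE mulrA. Qed.

Lemma dotp0r u : dotp u 0 = 0.
Proof. by rewrite /dotp big1 // => j _; rewrite mxE mulr0. Qed.

Lemma dotp0l u : dotp 0 u = 0.
Proof. by rewrite /dotp big1 // => j _; rewrite mxE mul0r. Qed.

Lemma dotp_suml (I : Type) (r : seq I) (F : I -> 'rV[R]_p) v :
  dotp (\sum_(i <- r) F i) v = \sum_(i <- r) dotp (F i) v.
Proof.
rewrite /dotp exchange_big /=; apply: eq_bigr => j _.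
by rewrite summxE mulr_suml.
Qed.

Lemma norm2_ge0 v : 0 <= norm2 v.
Proof. exact: sqrtr_ge0. Qed.

Lemma norm2Z c v : norm2 (c *: v) = `|c| * norm2 v.
Proof.
rewrite /norm2 -sqrtr_sqr -sqrtrM ?sqr_ge0 //; congr Num.sqrt.
by rewrite mulr_sumr; apply: eq_bigr => j _; rewrite mxE exprMn.
Qed.

Lemma norm2_eq0 v : norm2 v = 0 -> v = 0.
Proof.
move=> /eqP; rewrite /norm2 sqrtr_eq0 => H.
have H0 : \sum_(j < p) v 0 j ^+ 2 = 0.
  by apply/eqP; rewrite eq_le H /=; apply: sumr_ge0 => j _; exact: sqr_ge0.
apply/rowP => j; rewrite mxE.
have := @psumr_eq0P _ _ predT (fun j => v 0 j ^+ 2) (fun j _ => sqr_ge0 _) H0 j isT.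
by move/eqP; rewrite sqrf_eq0 => /eqP.
Qed.


Lemma wXd_split (T : Type) (G : nat) (n : 'I_G -> nat)
  (x : forall g : 'I_G, 'I_(n g) -> T -> 'rV[R]_p)
  (w : forall g : 'I_G, 'I_(n g) -> T -> R) delta t :
  wXd x w delta t = \sum_(j < G.+1) dotp (XTw x w j t) (delta j).
Proof.
rewrite big_ord_recl /XTw unlift_none.
under [X in _ = _ + X]eq_bigr => g _ do rewrite liftK.
rewrite /wXd dotp_suml -big_split /=; apply: eq_bigr => g _.
rewrite dotp_suml dotp_suml -big_split /=; apply: eq_bigr => i _.
by rewrite dotpDr mulrDr !dotpZl.
Qed.

Lemma normw0 (T : Type) (G : nat) (n : 'I_G -> nat)
  (x : forall g : 'I_G, 'I_(n g) -> T -> 'rV[R]_p)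
  (w : forall g : 'I_G, 'I_(n g) -> T -> R) j t :
  normw w j t = 0 -> XTw x w j t = 0.
Proof.
have sq0 (I : finType) (F : I -> R) : Num.sqrt (\sum_i F i ^+ 2) = 0 -> forall i, F i = 0.
  move=> /eqP; rewrite sqrtr_eq0 => H i.
  have H0 : \sum_i F i ^+ 2 = 0.
    by apply/eqP; rewrite eq_le H /=; apply: sumr_ge0 => l _; exact: sqr_ge0.
  have := @psumr_eq0P _ _ predT (fun l => F l ^+ 2) (fun l _ => sqr_ge0 _) H0 i isT.
  by move/eqP; rewrite sqrf_eq0 => /eqP.
rewrite /normw /XTw; case: unlift => [g|] H.
  by rewrite big1 // => i _; rewrite (sq0 _ _ H i) scale0r.
have H1 : \sum_(g < G) \sum_(i < n g) w g i t ^+ 2 = 0.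
  move/eqP: H; rewrite sqrtr_eq0 => H; apply/eqP; rewrite eq_le H /=.
  by apply: sumr_ge0 => g _; apply: sumr_ge0 => i _; exact: sqr_ge0.
rewrite big1 // => g _; rewrite big1 // => i _.
have H2 := @psumr_eq0P _ _ predT (fun g => \sum_(i < n g) w g i t ^+ 2)
   (fun g _ => sumr_ge0 _ (fun i _ => sqr_ge0 _)) H1 g isT.
have := @psumr_eq0P _ _ predT (fun l => w g l t ^+ 2) (fun l _ => sqr_ge0 _) H2 i isT.
by move/eqP; rewrite sqrf_eq0 => /eqP ->; rewrite scale0r.
Qed.

Lemma normw_ge0 (T : Type) (G : nat) (n : 'I_G -> nat)
  (w : forall g : 'I_G, 'I_(n g) -> T -> R) j t : 0 <= normw w j t.
Proof. by rewrite /normw; case: unlift => *; exact: sqrtr_ge0. Qed.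


Local Open Scope ereal_scope.
Lemma key (C : set 'rV[R]_p)
  (Ccone : forall (c : R) v, (0 <= c)%R -> C v -> C (c *: v))
  (X : 'rV[R]_p) (nw s S : R) (B M : \bar R)
  (hs : (0 < s)%R) (hS : (0 < S)%R) (BM : B <= M) (nw_ge0 : (0 <= nw)%R)
  (nw0 : nw = 0%R -> X = 0%R)
  (hyp : (s * nw)%:E * ereal_sup [set (dotp (nw^-1 *: X) u)%:E | u in sphere_part C]
           <= S%:E * B)
  (dl : 'rV[R]_p) (Cd : C dl) (dne : dl != 0%R) :
  exists r : R, dotp X dl = (norm2 dl / s * r)%R /\ r%:E <= S%:E * M.
Proof.
have hSM : S%:E * B <= S%:E * M by apply: lee_wpmul2l => //; rewrite lee_fin ltW.
have nd : (norm2 dl != 0)%R by apply/eqP => /norm2_eq0 /eqP; apply/negP.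
have nd0 : (0 < norm2 dl)%R by rewrite lt_def nd norm2_ge0.
have [nwz|nwne] := eqVneq nw 0%R.
  exists 0%R; rewrite (nw0 nwz) dotp0l mulr0; split => //; rewrite nwz in hyp.
  by apply: le_trans hSM; apply: le_trans hyp; rewrite mulr0 mul0e.
pose u := (norm2 dl)^-1 *: dl.
have Au : sphere_part C u.
  split; first by apply: Ccone => //; rewrite invr_ge0 norm2_ge0.
  by rewrite /u norm2Z ger0_norm ?invr_ge0 ?norm2_ge0 // mulVf.
exists (s * nw * dotp (nw^-1 *: X) u)%R; split.
  rewrite /u dotpZr dotpZl; field.
  by rewrite nwne nd lt0r_neq0.
apply: le_trans hSM; apply: le_trans hyp; rewrite EFinM.
apply: lee_wpmul2l; first by rewrite lee_fin mulr_ge0 // ltW.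
by apply: ereal_sup_ubound; exists u.
Qed.
Local Close Scope ereal_scope.


Local Open Scope ereal_scope.
Lemma det (I : finType) (a D : I -> R) (S : R) (M : \bar R)
  (hS : (0 < S)%R) (a0 : forall j, (0 <= a j)%R) (asum : (\sum_j a j = 1)%R)
  (az : forall j, a j = 0%R -> D j = 0%R)
  (anz : forall j, a j != 0%R -> exists r : R, D j = (a j * r)%R /\ r%:E <= S%:E * M) :
  (\sum_j D j)%:E <= S%:E * M.
Proof.
case: M anz => [m||] anz.
- rewrite -EFinM lee_fin.
  apply: (@le_trans _ _ (\sum_j a j * (S * m))%R).
    apply: ler_sum => j _; have [aj|aj] := eqVneq (a j) 0%R.
      by rewrite (az _ aj) aj mul0r.
    have [r [-> hr]] := anz j aj; apply: (ler_wpM2l (a0 j)).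
    by rewrite -lee_fin EFinM.
  by rewrite -mulr_suml asum mul1r.
- by rewrite gt0_muley ?leey // lte_fin.
- case: (pselect (exists j, a j != 0%R)) => [[j aj]|nj].
    have [r [_ hr]] := anz j aj.
    by move: hr; rewrite gt0_muleNy ?lte_fin // leeNy_eq.
  exfalso; move: asum; rewrite big1 => [/eqP|j _]; first by rewrite eq_sym oner_eq0.
  by apply/eqP/negPn/negP => aj; apply: nj; exists j.
Qed.
Local Close Scope ereal_scope.

End helpers.
Theorem theorem3 (R : realType)
  (d : measure_display) (T : measurableType d) (P : probability T R)
  (dQ : measure_display) (Om : measurableType dQ) (Q : probability Om R)
  (G p : nat) (n : 'I_G -> nat)
  (x : forall g : 'I_G, 'I_(n g) -> T -> 'rV[R]_p)
  (w : forall g : 'I_G, 'I_(n g) -> T -> R)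
  (k K : R) (f : 'I_G.+1 -> 'rV[R]_p -> R) (beta : 'I_G.+1 -> 'rV[R]_p)
  (h : 'I_p -> Om -> R)
  (sig nu eta zeta eps : 'I_G.+1 -> R) :
  let N : R := (nsz n ord0)%:R in
  let A (j : 'I_G.+1) := sphere_part (cone_gen (f j) (beta j)) in
  let Wd (j : 'I_G.+1) := gauss_width Q h (A j) in
  let logG : R := ln (G.+1)%:R in
  (0 < G)%N -> (0 < p)%N -> (forall g, (0 < n g)%N) ->
  (* Assumption (A): design rows *)
  (forall g i, meas_vec (x g i)) ->
  indep_vecs P (fun s : {g : 'I_G & 'I_(n g)} => x (tag s) (tagged s)) ->
  ident_vecs P (fun s : {g : 'I_G & 'I_(n g)} => x (tag s) (tagged s)) ->
  (forall g i j, P.-integrable setT (fun t => (x g i t 0 j)%:E) /\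
                 (\int[P]_t (x g i t 0 j)%:E = 0)%E) ->
  (forall g i (j l : 'I_p),
     (\int[P]_t (x g i t 0 j * x g i t 0 l)%:E = (if j == l then 1 else 0)%:E)%E) ->
  (forall g i, subg_vec_le P (x g i) k) ->
  (* Assumption (A): noise *)
  (forall g i, measurable_fun setT (w g i)) ->
  indep_rvs P (fun s : {g : 'I_G & 'I_(n g)} => w (tag s) (tagged s)) ->
  ident_rvs P (fun s : {g : 'I_G & 'I_(n g)} => w (tag s) (tagged s)) ->
  (forall g i, P.-integrable setT (fun t => (w g i t)%:E) /\
               (\int[P]_t (w g i t)%:E = 0)%E) ->
  (forall g i, (\int[P]_t (w g i t ^+ 2)%:E = 1)%E) ->
  (forall g i, (psi2_norm P (w g i) <= K%:E)%E) ->
  (* convex f_g ; Gaussian vector used for the Gaussian width *)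
  (forall j, convex_fn (f j)) ->
  std_gaussian_vec Q h ->
  (* group-dependent constants and their defining per-group bound *)
  (forall j, 0 < sig j /\ 0 < nu j /\ 0 < eta j /\ 0 < zeta j /\ 0 < eps j) ->
  (forall (j : 'I_G.+1) (tau : R), 0 < tau ->
     exists E : set T, measurable E /\
       E `<=` [set t | ((Num.sqrt (N / (nsz n j)%:R) * normw w j t)%:E *
                          ereal_sup [set (dotp ((normw w j t)^-1 *: XTw x w j t) u)%:E
                                    | u in A j]
                        <= (Num.sqrt ((2 * K ^+ 2 + 1) * N))%:E *
                           ((zeta j * k)%:E * Wd j + (eps j * Num.sqrt logG + tau)%:E))%E] /\
       ((1 - sig j / (G.+1)%:R *
             expR (- Num.min (nu j * (nsz n j)%:R - logG)
                             (tau ^+ 2 / (eta j ^+ 2 * k ^+ 2))))%:E <= P E)%E) ->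
  let sigma := \big[Num.max/0]_(j < G.+1) sig j in
  forall tau : R, 0 < tau ->
    let m (j : 'I_G.+1) := Num.min (nu j * (nsz n j)%:R - logG)
                                   (tau ^+ 2 / (eta j ^+ 2 * k ^+ 2)) in
    exists E : set T, measurable E /\
      E `<=` [set t | forall delta : 'I_G.+1 -> 'rV[R]_p, Hbar n f beta delta ->
                ((2 / N * wXd x w delta t)%:E
                 <= (Num.sqrt ((8 * K ^+ 2 + 4) / N))%:E *
                    \big[Order.max/-oo]_(j < G.+1)
                       ((zeta j * k)%:E * Wd j + (eps j * Num.sqrt logG + tau)%:E))%E] /\
      ((1 - sigma * expR (- \big[Num.min/m ord0]_(j < G.+1) m j))%:E <= P E)%E.
Proof.
move=> N A Wd logG G0 p0 n0 _ _ _ _ _ _ _ _ _ _ _ _ _ _ hconst hE sigma tau tau0 m.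
have /choice [E HE] := fun j => hE j tau tau0.
have nszpos : forall j, (0 < nsz n j)%N.
  move=> j; rewrite /nsz; case: unlift => [g|] //.
  rewrite (bigD1 (Ordinal G0)) //=; exact: ltn_addr.
have Npos : (0 < N)%R by rewrite ltr0n.
exists (\big[setI/setT]_(j < G.+1) E j).
have Ej : forall t, (\big[setI/setT]_(j < G.+1) E j) t -> forall j, E j t.
  by move=> t Et j; move: Et; rewrite (bigD1 j) //= => -[].
split; first by apply: bigsetI_measurable => j _; exact: (HE j).1.
split.
  move=> t /Ej Et delta [Hcone Hsum] /=.
  pose S := Num.sqrt ((2 * K ^+ 2 + 1) * N).
  have Spos : (0 < S)%R.
    rewrite sqrtr_gt0 mulr_gt0 //; have := sqr_ge0 K; lra.
  have -> : Num.sqrt ((8 * K ^+ 2 + 4) / N) = (2 / N * S)%R.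
    have -> : ((8 * K ^+ 2 + 4) / N = (2 / N * S) ^+ 2)%R.
      rewrite exprMn sqr_sqrtr; last by apply: mulr_ge0; [have := sqr_ge0 K; lra | exact: ltW].
      by field; rewrite lt0r_neq0.
    by rewrite sqrtr_sqr ger0_norm // mulr_ge0 // ?divr_ge0 // ltW.
  rewrite wXd_split (EFinM (2 / N) S) -muleA (EFinM (2 / N)).
  apply: lee_wpmul2l; first by rewrite lee_fin divr_ge0 // ltW.
  pose sj j := Num.sqrt (N / (nsz n j)%:R).
  have sjpos j : (0 < sj j)%R by rewrite sqrtr_gt0 divr_gt0 // ltr0n.
  apply: (@det _ _ (fun j => Num.sqrt ((nsz n j)%:R / (nsz n ord0)%:R) * norm2 (delta j))%R).
  - exact: Spos.
  - by move=> j; rewrite mulr_ge0 ?sqrtr_ge0 ?norm2_ge0.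
  - exact: Hsum.
  - move=> j /eqP; rewrite mulf_eq0 => /orP [|/eqP /norm2_eq0 ->]; last by rewrite dotp0r.
    by rewrite gt_eqF // sqrtr_gt0 divr_gt0 ?ltr0n.
  - move=> j aj.
    have dne : delta j != 0%R.
      apply: contraNneq aj => ->; rewrite /norm2 big1 ?sqrtr0 ?mulr0 // => i _.
      by rewrite mxE expr0n.
    have Ccone : forall (c : R) v, (0 <= c)%R -> cone_gen (f j) (beta j) v ->
        cone_gen (f j) (beta j) (c *: v).
      move=> c v c0 [s [dd [s0 [fs ->]]]]; exists (c * s)%R, dd; split; first exact: mulr_ge0.
      by rewrite scalerA.
    have := @key _ _ (cone_gen (f j) (beta j)) Ccone (XTw x w j t) (normw w j t) (sj j) S
       ((zeta j * k)%:E * Wd j + (eps j * Num.sqrt logG + tau)%:E)%E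
       (\big[Order.max/-oo%E]_(j < G.+1) ((zeta j * k)%:E * Wd j + (eps j * Num.sqrt logG + tau)%:E))%E
       (sjpos j) Spos (le_bigmax _ _ j) (normw_ge0 _ _ _ w j t) (normw0 _ _ _ x w j t)
       ((HE j).2.1 t (Et j)) (delta j) (Hcone j) dne.
    move=> [r [-> hr]]; exists r; split => //.
    congr (_ * _)%R; rewrite mulrC /sj -sqrtrV ?divr_ge0 ?ler0n // invf_div.
    by [].

pose c j := (sig j / (G.+1)%:R * expR (- m j))%R.
have PEj : forall j, (P (~` E j) <= (c j)%:E)%E.
  move=> j; have [mE [_ hP]] := HE j.
  rewrite probability_setC //.
  rewrite -(fineK (fin_num_measure P _ mE)) in hP *.
  rewrite -EFinB lee_fin; move: hP; rewrite lee_fin /c /m; by rewrite !lerBlDr addrC.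
have U : measurable (\big[setI/setT]_(j < G.+1) E j) /\
    (P (~` (\big[setI/setT]_(j < G.+1) E j)) <= \sum_(j < G.+1) P (~` E j))%E.
  apply: (big_ind2 (fun S e => measurable S /\ (P (~` S) <= e)%E)).
  - by rewrite setCT measure0.
  - move=> S1 e1 S2 e2 [m1 h1] [m2 h2]; split; first exact: measurableI.
    rewrite setCI; apply: le_trans (measureU2 _ _ _) _; try exact: measurableC.
    exact: leeD.
  - by move=> j _; split; [exact: (HE j).1|].
have mB := U.1.
have hc : (\sum_(j < G.+1) c j <= sigma * expR (- \big[Num.min/m ord0]_(j < G.+1) m j))%R.
  apply: (@le_trans _ _ (\sum_(j < G.+1) (sigma / (G.+1)%:R * expR (- \big[Num.min/m ord0]_(j < G.+1) m j)))%R).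
    apply: ler_sum => j _; rewrite /c; apply: ler_pM.
    - by rewrite divr_ge0 // ltW // (hconst j).1.
    - exact: expR_ge0.
    - by apply: ler_wpM2r; [rewrite invr_ge0 // | exact: le_bigmax].
    - by rewrite ler_expR lerN2; exact: bigmin_le.
  by rewrite sumr_const card_ord -[_ *+ _]mulr_natr mulrAC mulfVK ?pnatr_eq0.
have hPc : (P (~` (\big[setI/setT]_(j < G.+1) E j)) <= (sigma * expR (- \big[Num.min/m ord0]_(j < G.+1) m j))%:E)%E.
  apply: (le_trans U.2); apply: (@le_trans _ _ (\sum_(j < G.+1) (c j)%:E)%E); first by apply: lee_sum => j _; exact: PEj.
  by rewrite sumEFin lee_fin.
have := probability_setC P (measurableC mB); rewrite setCK => ->.
move: hPc; rewrite -(fineK (fin_num_measure P _ (measurableC mB))).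
by rewrite -EFinB !lee_fin; lra.
Qed.
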